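(* Let $n\ge 3$ be an integer, let $\Omega\subset\mathbb{R}^2$ be open, and let $\Lambda>0$ and $a_0,\dots,a_n$ be smooth real functions of $(x,y)\in\Omega$. Put $H=\frac{p_1^2+p_2^2}{2\Lambda}$ and $F=\sum_{i=0}^n a_i(x,y)\,p_1^{\,n-i}p_2^{\,i}$, and assume $\{H,F\}=0$ identically in $(x,y,p_1,p_2)$. Assume moreover that there are real constants $c_1,c_2$ with $$a_{n-1}=c_1+\sum_{j\ge 0,\ 2j\le n-3}(-1)^j a_{n-3-2j},\qquad a_n=c_2+\sum_{j\ge 0,\ 2j\le n-2}(-1)^j a_{n-2-2j}.$$ (i) If $n=2k$ is even, set $S_e=\sum_{j=0}^{k-1}(-1)^j(n-2j)a_{2j}$ and $S_o=\sum_{j=0}^{k-2}(-1)^j(n-2-2j)a_{2j+1}$. Then $$\big[S_e\Lambda\big]_x+\big[(-S_o+(-1)^{k+1}(n-1)c_1)\Lambda\big]_y=0,\qquad \big[(S_o+(-1)^{k+1}c_1)\Lambda\big]_x+\big[(S_e+(-1)^{k+1}nc_2)\Lambda\big]_y=0 .$$ (ii) If $n=2k+1$ is odd, set $T_e=\sum_{j=0}^{k-1}(-1)^j(n-1-2j)a_{2j}$ and $T_o=\sum_{j=0}^{k-1}(-1)^j(n-1-2j)a_{2j+1}$. Then $$\big[(T_e+(-1)^{k}c_1)\Lambda\big]_x+\big[(-T_o+(-1)^{k}nc_2)\Lambda\big]_y=0,\qquad \big[T_o\Lambda\big]_x+\big[(T_e+(-1)^{k+1}(n-1)c_1)\Lambda\big]_y=0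 .$$
   Context: The Poisson bracket is $\{H,F\}=\sum_{j=1}^2\left(\frac{\partial H}{\partial q^j}\frac{\partial F}{\partial p_j}-\frac{\partial H}{\partial p_j}\frac{\partial F}{\partial q^j}\right)$ with $(q^1,q^2)=(x,y)$. The condition $\{H,F\}=0$ says that $F$ is a first integral (polynomial of degree $n$ in momenta) of the geodesic flow of the metric $\Lambda(x,y)(dx^2+dy^2)$. Subscripts $x,y$ denote partial derivatives. *)

(* Defs.v *)
From Stdlib Require Import Reals List.
Open Scope R_scope.

Fixpoint sumR (m : nat) (f : nat -> R) : R :=
  match m with
  | O => 0
  | S m' => sumR m' f + f m'
  end.

Definition open2 (Om : R -> R -> Prop) : Prop :=
  forall x y, Om x y -> exists r, 0 < r /\
    forall x' y', (x' - x)^2 + (y' - y)^2 < r^2 -> Om x' y'.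

Definition cont2_at (f : R -> R -> R) (x y : R) : Prop :=
  forall eps, 0 < eps -> exists delta, 0 < delta /\
    forall x' y', Rabs (x' - x) < delta -> Rabs (y' - y) < delta ->
      Rabs (f x' y' - f x y) < eps.

Definition has_dx (f : R -> R -> R) (x y l : R) : Prop :=
  derivable_pt_lim (fun t => f t y) x l.
Definition has_dy (f : R -> R -> R) (x y l : R) : Prop :=
  derivable_pt_lim (fun t => f x t) y l.

(* Smooth (C^infinity) on Om: there is a family D of all iterated partial
   derivatives (D w = derivative along the word w; false = d/dx, true = d/dy),
   with D nil = f, each D w having partial derivatives D (false::w), D (true::w)
   at every point of Om, and each D w jointly continuous on Om. *)
Definition smooth_on (Om : R -> R -> Prop) (f : R -> R -> R) : Prop :=
  exists D : list bool -> R -> R -> R,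
    D nil = f /\
    forall w x y, Om x y ->
      has_dx (D w) x y (D (false :: w) x y) /\
      has_dy (D w) x y (D (true :: w) x y) /\
      cont2_at (D w) x y.

Definition Ham (Lam : R -> R -> R) (x y p1 p2 : R) : R :=
  (p1^2 + p2^2) / (2 * Lam x y).
Definition Fpoly (n : nat) (a : nat -> R -> R -> R) (x y p1 p2 : R) : R :=
  sumR (S n) (fun i => a i x y * p1 ^ (n - i) * p2 ^ i).

Definition d4_x (G : R -> R -> R -> R -> R) x y p1 p2 l :=
  derivable_pt_lim (fun t => G t y p1 p2) x l.
Definition d4_y (G : R -> R -> R -> R -> R) x y p1 p2 l :=
  derivable_pt_lim (fun t => G x t p1 p2) y l.
Definition d4_p1 (G : R -> R -> R -> R -> R) x y p1 p2 l :=
  derivable_pt_lim (fun t => G x y t p2) p1 l.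
Definition d4_p2 (G : R -> R -> R -> R -> R) x y p1 p2 l :=
  derivable_pt_lim (fun t => G x y p1 t) p2 l.

(* {H,F} = 0 at (x,y,p1,p2): whatever the (unique) partial derivatives are,
   H_x F_p1 - H_p1 F_x + H_y F_p2 - H_p2 F_y = 0. *)
Definition poisson_zero_at (H F : R -> R -> R -> R -> R) x y p1 p2 : Prop :=
  forall Hx Hy Hp1 Hp2 Fx Fy Fp1 Fp2,
    d4_x H x y p1 p2 Hx -> d4_y H x y p1 p2 Hy ->
    d4_p1 H x y p1 p2 Hp1 -> d4_p2 H x y p1 p2 Hp2 ->
    d4_x F x y p1 p2 Fx -> d4_y F x y p1 p2 Fy ->
    d4_p1 F x y p1 p2 Fp1 -> d4_p2 F x y p1 p2 Fp2 ->
    (Hx * Fp1 - Hp1 * Fx) + (Hy * Fp2 - Hp2 * Fy) = 0.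

Definition div_zero_at (G K : R -> R -> R) (x y : R) : Prop :=
  exists d1 d2, has_dx G x y d1 /\ has_dy K x y d2 /\ d1 + d2 = 0.

(* Main.v *)
Require Import Defs.
From Stdlib Require Import Reals List Lra Lia Psatz ClassicalEpsilon.
Open Scope R_scope.

Notation dpl := derivable_pt_lim.

Lemma sumR_S N f : sumR (S N) f = sumR N f + f N.
Proof. reflexivity. Qed.

Lemma sumR_ext N f g : (forall m, (m < N)%nat -> f m = g m) -> sumR N f = sumR N g.
Proof.
  induction N; intros H; simpl; [reflexivity|].
  rewrite IHN by (intros; apply H; lia). rewrite H by lia. reflexivity.
Qed.

Lemma sumR_plus N f g : sumR N (fun m => f m + g m) = sumR N f + sumR N g.
Proof. induction N; simpl; [ring|]. rewrite IHN. ring. Qed.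

Lemma sumR_scal N c f : sumR N (fun m => c * f m) = c * sumR N f.
Proof. induction N; simpl; [ring|]. rewrite IHN. ring. Qed.

Lemma sumR_front N f : sumR (S N) f = f O + sumR N (fun j => f (S j)).
Proof. induction N; simpl in *; [ring|]. rewrite IHN. ring. Qed.

Lemma m1_sq j : (-1)^j * (-1)^j = 1.
Proof. rewrite <- Rpow_mult_distr. replace (-1 * -1) with 1 by ring. apply pow1. Qed.

Lemma sumR_opp N f : sumR N (fun m => - f m) = - sumR N f.
Proof. induction N; simpl; [ring|]. rewrite IHN. ring. Qed.

Lemma sumR_rev m h : sumR (S m) (fun j => (-1)^j * h (m - j)%nat) = (-1)^m * sumR (S m) (fun j => (-1)^j * h j).
Proof.
  induction m.
  - simpl. ring.
  - rewrite sumR_front. replace (S m - 0)%nat with (S m) by lia.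
    rewrite (sumR_ext _ _ (fun j => - ((-1)^j * h (m - j)%nat))).
    2:{ intros j Hj. replace (S m - S j)%nat with (m - j)%nat by lia. simpl. ring. }
    rewrite sumR_opp, IHm. rewrite (sumR_S (S m)). simpl pow.
    set (S0 := sumR (S m) (fun j : nat => (-1) ^ j * h j)).
    replace (-1 * (-1) ^ m * (S0 + -1 * (-1) ^ m * h (S m))) with (-((-1)^m*S0) + ((-1)^m*(-1)^m)*h (S m)) by ring.
    rewrite m1_sq. ring.
Qed.

Fixpoint ladd (l1 l2 : list R) : list R :=
  match l1, l2 with
  | nil, _ => l2
  | _, nil => l1
  | a :: l1', b :: l2' => (a + b) :: ladd l1' l2'
  end.
Definition lscal (c : R) (l : list R) := map (Rmult c) l.
Fixpoint lD (l : list R) : list R :=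
  match l with nil => nil | _ :: l' => ladd l' (0 :: lD l') end.
Fixpoint evR (t : R) (l : list R) : R :=
  match l with nil => 0 | c :: l' => c + t * evR t l' end.
Fixpoint evI (l : list R) : R * R :=
  match l with nil => (0, 0) | c :: l' => (c - snd (evI l'), fst (evI l')) end.
Definition re l := fst (evI l).
Definition im l := snd (evI l).

Lemma evR_cons t c l : evR t (c :: l) = c + t * evR t l.
Proof. reflexivity. Qed.
Lemma evR_add t l1 l2 : evR t (ladd l1 l2) = evR t l1 + evR t l2.
Proof.
  revert l2; induction l1; intros [|b l2]; simpl; try ring.
  rewrite IHl1. ring.
Qed.
Lemma evR_scal t c l : evR t (lscal c l) = c * evR t l.
Proof. induction l; simpl; [ring|]. unfold lscal in *. rewrite IHl. ring. Qed.

Lemma re_cons c l : re (c :: l) = c - im l.  Proof. reflexivity. Qed.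
Lemma im_cons c l : im (c :: l) = re l.  Proof. reflexivity. Qed.
Lemma re_nil : re nil = 0. Proof. reflexivity. Qed.
Lemma im_nil : im nil = 0. Proof. reflexivity. Qed.

Lemma reim_add l1 l2 : re (ladd l1 l2) = re l1 + re l2 /\ im (ladd l1 l2) = im l1 + im l2.
Proof.
  revert l2; induction l1; intros [|b l2]; simpl ladd; rewrite ?re_nil, ?im_nil; try (split; ring).
  rewrite !re_cons, !im_cons. destruct (IHl1 l2) as [H1 H2]. rewrite H1, H2. split; ring.
Qed.
Lemma re_add l1 l2 : re (ladd l1 l2) = re l1 + re l2. Proof. apply reim_add. Qed.
Lemma im_add l1 l2 : im (ladd l1 l2) = im l1 + im l2. Proof. apply reim_add. Qed.

Lemma reim_scal c l : re (lscal c l) = c * re l /\ im (lscal c l) = c * im l.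
Proof.
  induction l; simpl; [split; unfold re, im; simpl; ring|].
  change (re (c * a :: lscal c l) = c * re (a :: l) /\ im (c * a :: lscal c l) = c * im (a :: l)).
  rewrite !re_cons, !im_cons. destruct IHl as [H1 H2]. rewrite H1, H2. split; ring.
Qed.
Lemma re_scal c l : re (lscal c l) = c * re l. Proof. apply reim_scal. Qed.
Lemma im_scal c l : im (lscal c l) = c * im l. Proof. apply reim_scal. Qed.

Lemma re_D_cons c l : re (lD (c :: l)) = re l - im (lD l).
Proof. change (re (ladd l (0 :: lD l)) = re l - im (lD l)). rewrite re_add, re_cons. ring. Qed.
Lemma im_D_cons c l : im (lD (c :: l)) = im l + re (lD l).
Proof. change (im (ladd l (0 :: lD l)) = im l + re (lD l)). rewrite im_add, im_cons. ring. Qed.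

Lemma reim_D_add l1 l2 : re (lD (ladd l1 l2)) = re (lD l1) + re (lD l2) /\
                         im (lD (ladd l1 l2)) = im (lD l1) + im (lD l2).
Proof.
  revert l2; induction l1; intros [|b l2]; [simpl; rewrite ?re_nil, ?im_nil; split; ring|simpl; rewrite ?re_nil, ?im_nil; split; ring|simpl; rewrite ?re_nil, ?im_nil; split; ring|]. change (ladd (a :: l1) (b :: l2)) with ((a+b) :: ladd l1 l2).
  rewrite !re_D_cons, !im_D_cons, re_add, im_add. destruct (IHl1 l2) as [H1 H2]. rewrite H1, H2. split; ring.
Qed.
Lemma re_D_add l1 l2 : re (lD (ladd l1 l2)) = re (lD l1) + re (lD l2). Proof. apply reim_D_add. Qed.
Lemma im_D_add l1 l2 : im (lD (ladd l1 l2)) = im (lD l1) + im (lD l2). Proof. apply reim_D_add. Qed.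

Lemma reim_D_scal c l : re (lD (lscal c l)) = c * re (lD l) /\ im (lD (lscal c l)) = c * im (lD l).
Proof.
  induction l; [simpl; unfold re, im; simpl; split; ring|].
  change (lscal c (a :: l)) with (c * a :: lscal c l).
  rewrite !re_D_cons, !im_D_cons, re_scal, im_scal. destruct IHl as [H1 H2]. rewrite H1, H2. split; ring.
Qed.
Lemma re_D_scal c l : re (lD (lscal c l)) = c * re (lD l). Proof. apply reim_D_scal. Qed.
Lemma im_D_scal c l : im (lD (lscal c l)) = c * im (lD l). Proof. apply reim_D_scal. Qed.

Lemma Dl_const c x : dpl (fun _ => c) x 0.
Proof. apply derivable_pt_lim_const. Qed.
Lemma Dl_id x : dpl (fun t => t) x 1.
Proof. apply derivable_pt_lim_id. Qed.
Lemma Dl_plus f g x a b : dpl f x a -> dpl g x b -> dpl (fun t => f t + g t) x (a + b).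
Proof. intros. exact (derivable_pt_lim_plus f g x a b H H0). Qed.
Lemma Dl_opp f x a : dpl f x a -> dpl (fun t => - f t) x (- a).
Proof. intros. exact (derivable_pt_lim_opp f x a H). Qed.
Lemma Dl_mult f g x a b : dpl f x a -> dpl g x b -> dpl (fun t => f t * g t) x (a * g x + f x * b).
Proof. intros. exact (derivable_pt_lim_mult f g x a b H H0). Qed.
Lemma Dl_div f g x a b : dpl f x a -> dpl g x b -> g x <> 0 ->
  dpl (fun t => f t / g t) x ((a * g x - b * f x) / (g x * g x)).
Proof. intros. exact (derivable_pt_lim_div f g x a b H H0 H1). Qed.
Lemma Dl_pow x n : dpl (fun t => t ^ n) x (INR n * x ^ Init.Nat.pred n).
Proof. apply derivable_pt_lim_pow. Qed.
Lemma Dl_eq f x l l' : dpl f x l -> l = l' -> dpl f x l'.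
Proof. intros H ->. exact H. Qed.

Lemma Dl_local f g x l d : 0 < d -> (forall t, Rabs (t - x) < d -> f t = g t) -> dpl f x l -> dpl g x l.
Proof.
  unfold derivable_pt_lim. intros Hd Heq H eps Heps.
  destruct (H eps Heps) as [del Hdel].
  assert (Hm : 0 < Rmin del d) by (apply Rmin_pos; [apply cond_pos|lra]).
  exists (mkposreal _ Hm). intros h hne hlt. simpl in hlt.
  rewrite <- !Heq.
  - apply Hdel; auto. apply Rlt_le_trans with (1 := hlt). apply Rmin_l.
  - replace (x - x) with 0 by ring. rewrite Rabs_R0. lra.
  - replace (x + h - x) with h by ring. apply Rlt_le_trans with (1 := hlt). apply Rmin_r.
Qed.

Lemma Dl_ext f g x l : (forall t, f t = g t) -> dpl f x l -> dpl g x l.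
Proof. intros. apply (Dl_local f g x l 1); auto; lra. Qed.

Lemma D_sumR N (f : nat -> R -> R) (d : nat -> R) x :
  (forall j, (j < N)%nat -> dpl (f j) x (d j)) ->
  dpl (fun t => sumR N (fun j => f j t)) x (sumR N d).
Proof.
  induction N; intros H.
  - simpl. apply Dl_const.
  - simpl. apply Dl_plus. apply IHN. intros; apply H; lia. apply H; lia.
Qed.

Lemma evR_deriv l t : dpl (fun s => evR s l) t (evR t (lD l)).
Proof.
  induction l.
  - simpl. apply Dl_const.
  - simpl lD. rewrite evR_add, evR_cons. simpl evR.
    eapply Dl_eq. apply Dl_plus. apply Dl_const. apply Dl_mult. apply Dl_id. exact IHl.
    cbv beta. ring.
Qed.

Definition lzero (l : list R) := Forall (fun c => c = 0) l.

Lemma evR_zero_coef l : (forall t, evR t l = 0) -> lzero l.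
Proof.
  induction l; intros H; constructor.
  - specialize (H 0). simpl in H. lra.
  - apply IHl. intros t.
    assert (Ha : a = 0) by (specialize (H 0); simpl in H; lra).
    destruct (Req_dec t 0) as [->|Ht].
    + pose proof (evR_deriv (a :: l) 0) as Hd.
      apply (Dl_ext _ (fun _ => 0)) in Hd; [|intro s; apply H].
      pose proof (uniqueness_limite _ _ _ _ Hd (Dl_const 0 0)) as E.
      simpl lD in E. rewrite evR_add, evR_cons in E. lra.
    + specialize (H t). simpl in H. rewrite Ha in H.
      apply (Rmult_eq_reg_l t); [lra|auto].
Qed.

Lemma lzero_add l1 l2 : lzero l1 -> lzero l2 -> lzero (ladd l1 l2).
Proof.
  revert l2; induction l1; intros [|b l2] H1 H2; simpl; auto.
  inversion H1; inversion H2; subst. constructor. ring. apply IHl1; auto.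
Qed.

Lemma lzero_D l : lzero l -> lzero (lD l).
Proof.
  induction l; intros H; simpl; [constructor|].
  inversion H; subst. apply lzero_add; auto. constructor; auto. apply IHl; auto.
Qed.

Lemma lzero_reim l : lzero l -> re l = 0 /\ im l = 0.
Proof.
  induction l; intros H; [split; reflexivity|].
  inversion H; subst. rewrite re_cons, im_cons. destruct (IHl H3). split; lra.
Qed.

Fixpoint mkl (N : nat) (g : nat -> R) : list R :=
  match N with O => nil | S N' => mkl N' g ++ (g N' :: nil) end.
Fixpoint ipw (m : nat) : R * R :=
  match m with O => (1, 0) | S m' => (- snd (ipw m'), fst (ipw m')) end.

Lemma mkl_length N g : length (mkl N g) = N.
Proof. induction N; simpl; auto. rewrite length_app, IHN. simpl. lia. Qed.

Lemma evR_app t l c : evR t (l ++ c :: nil) = evR t l + c * t ^ length l.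
Proof. induction l; simpl; [ring|]. rewrite IHl. ring. Qed.

Lemma evR_mkl t N g : evR t (mkl N g) = sumR N (fun m => g m * t ^ m).
Proof. induction N; simpl; [reflexivity|]. rewrite evR_app, IHN, mkl_length. reflexivity. Qed.

Lemma reim_app l c : re (l ++ c :: nil) = re l + c * fst (ipw (length l)) /\
                     im (l ++ c :: nil) = im l + c * snd (ipw (length l)).
Proof.
  induction l.
  - simpl. unfold re, im; simpl. split; ring.
  - simpl app. rewrite !re_cons, !im_cons. destruct IHl as [H1 H2]. rewrite H1, H2.
    simpl length. simpl ipw. split; simpl; ring.
Qed.

Lemma re_mkl N g : re (mkl N g) = sumR N (fun m => g m * fst (ipw m)).
Proof. induction N; [reflexivity|]. simpl mkl. rewrite (proj1 (reim_app _ _)), IHN, mkl_length. reflexivity. Qed.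
Lemma im_mkl N g : im (mkl N g) = sumR N (fun m => g m * snd (ipw m)).
Proof. induction N; [reflexivity|]. simpl mkl. rewrite (proj2 (reim_app _ _)), IHN, mkl_length. reflexivity. Qed.

Lemma reim_D_app l c : re (lD (l ++ c :: nil)) = re (lD l) + c * INR (length l) * fst (ipw (pred (length l))) /\
                       im (lD (l ++ c :: nil)) = im (lD l) + c * INR (length l) * snd (ipw (pred (length l))).
Proof.
  induction l.
  - simpl. unfold re, im; simpl. split; ring.
  - simpl app. rewrite !re_D_cons, !im_D_cons. destruct IHl as [H1 H2]. rewrite H1, H2.
    destruct (reim_app l c) as [H3 H4]. rewrite H3, H4.
    simpl length. rewrite S_INR. destruct (length l) as [|L].
    + simpl. split; ring.
    + simpl pred. simpl ipw. split; simpl; ring.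
Qed.

Lemma re_D_mkl N g : re (lD (mkl N g)) = sumR N (fun m => g m * INR m * fst (ipw (pred m))).
Proof. induction N; [reflexivity|]. simpl mkl. rewrite (proj1 (reim_D_app _ _)), IHN, mkl_length. reflexivity. Qed.
Lemma im_D_mkl N g : im (lD (mkl N g)) = sumR N (fun m => g m * INR m * snd (ipw (pred m))).
Proof. induction N; [reflexivity|]. simpl mkl. rewrite (proj2 (reim_D_app _ _)), IHN, mkl_length. reflexivity. Qed.

Lemma ipw_SS m : ipw (S (S m)) = (- fst (ipw m), - snd (ipw m)).
Proof. reflexivity. Qed.

Lemma ipw_par j : ipw (2 * j) = ((-1)^j, 0) /\ ipw (S (2 * j)) = (0, (-1)^j).
Proof.
  induction j.
  - simpl. split; f_equal; ring.
  - replace (2 * S j)%nat with (S (S (2 * j))) by lia.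
    rewrite !ipw_SS. destruct IHj as [H1 H2]. rewrite H1, H2. simpl. split; f_equal; ring.
Qed.

Lemma sum_par K h : sumR (2 * K) (fun m => h m * fst (ipw m)) = sumR K (fun j => (-1)^j * h (2 * j)%nat) /\
                    sumR (2 * K) (fun m => h m * snd (ipw m)) = sumR K (fun j => (-1)^j * h (S (2 * j))).
Proof.
  induction K.
  - simpl. split; reflexivity.
  - replace (2 * S K)%nat with (S (S (2 * K))) by lia.
    rewrite !sumR_S. destruct IHK as [H1 H2]. rewrite H1, H2.
    destruct (ipw_par K) as [H3 H4]. rewrite H3, H4. simpl. split; ring.
Qed.

Lemma bId n g :
  re (mkl (S n) (fun m => INR (n - m) * g m)) = INR n * re (mkl (S n) g) + im (lD (mkl (S n) g)) /\
  im (mkl (S n) (fun m => INR (n - m) * g m)) = INR n * im (mkl (S n) g) - re (lD (mkl (S n) g)).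
Proof.
  rewrite re_mkl, im_mkl, re_mkl, im_mkl, re_D_mkl, im_D_mkl.
  rewrite <- !sumR_scal. unfold Rminus. rewrite <- sumR_opp, <- !sumR_plus.
  split; apply sumR_ext; intros m Hm; destruct m as [|m].
  - simpl. rewrite Nat.sub_0_r. ring.
  - rewrite minus_INR by lia. simpl pred. simpl ipw. rewrite S_INR. simpl. ring.
  - simpl. ring.
  - rewrite minus_INR by lia. simpl pred. simpl ipw. rewrite S_INR. simpl. ring.
Qed.

Definition bl n (g : nat -> R) := mkl (S n) (fun m => INR (n - m) * g m).

Lemma EvenRe n k g : n = (2 * k)%nat ->
  sumR k (fun j => (-1)^j * INR (n - 2 * j) * g (2 * j)%nat) = re (bl n g).
Proof.
  intros ->. unfold bl. rewrite re_mkl, sumR_S, (proj1 (sum_par _ _)).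
  rewrite Nat.sub_diag. simpl INR. rewrite Rmult_0_l, Rmult_0_l, Rplus_0_r.
  apply sumR_ext; intros; ring.
Qed.

Lemma EvenIm n k g : n = (2 * k)%nat -> (2 <= k)%nat ->
  sumR (k - 1) (fun j => (-1)^j * INR (n - 2 - 2 * j) * g (2 * j + 1)%nat) + im (mkl (S n) g) = im (bl n g).
Proof.
  intros -> Hk. unfold bl. rewrite !im_mkl, !sumR_S, !(proj2 (sum_par _ _)).
  destruct (ipw_par k) as [H1 _]. rewrite H1. simpl snd.
  destruct k as [|k']; [lia|]. replace (S k' - 1)%nat with k' by lia.
  rewrite (sumR_S k' (fun j => (-1)^j * g (S (2 * j)))).
  rewrite (sumR_S k' (fun j => (-1)^j * (INR (2 * S k' - S (2 * j)) * g (S (2 * j))))).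
  replace (2 * S k' - S (2 * k'))%nat with 1%nat by lia.
  assert (E : sumR k' (fun j => (-1) ^ j * INR (2 * S k' - 2 - 2 * j) * g (2 * j + 1)%nat) +
              sumR k' (fun j => (-1)^j * g (S (2 * j))) =
              sumR k' (fun j => (-1) ^ j * (INR (2 * S k' - S (2 * j)) * g (S (2 * j))))).
  { rewrite <- sumR_plus. apply sumR_ext. intros j Hj.
    replace (2 * S k' - S (2 * j))%nat with (S (2 * S k' - 2 - 2 * j)) by lia.
    rewrite S_INR. replace (2 * j + 1)%nat with (S (2 * j)) by lia. ring. }
  rewrite <- E. simpl INR. ring.
Qed.

Lemma OddRe n k g : n = (2 * k + 1)%nat ->
  sumR k (fun j => (-1)^j * INR (n - 1 - 2 * j) * g (2 * j)%nat) + re (mkl (S n) g) = re (bl n g).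
Proof.
  intros ->. unfold bl. rewrite !re_mkl.
  replace (S (2 * k + 1)) with (2 * S k)%nat by lia.
  rewrite !(proj1 (sum_par _ _)), !sumR_S.
  replace (2 * k + 1 - 2 * k)%nat with 1%nat by lia.
  assert (E : sumR k (fun j => (-1) ^ j * INR (2 * k + 1 - 1 - 2 * j) * g (2 * j)%nat) +
              sumR k (fun j => (-1)^j * g (2 * j)%nat) =
              sumR k (fun j => (-1) ^ j * (INR (2 * k + 1 - 2 * j) * g (2 * j)%nat))).
  { rewrite <- sumR_plus. apply sumR_ext. intros j Hj.
    replace (2 * k + 1 - 2 * j)%nat with (S (2 * k + 1 - 1 - 2 * j)) by lia.
    rewrite S_INR. ring. }
  rewrite <- E. simpl INR. ring.
Qed.

Lemma OddIm n k g : n = (2 * k + 1)%nat ->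
  sumR k (fun j => (-1)^j * INR (n - 1 - 2 * j) * g (2 * j + 1)%nat) = im (bl n g).
Proof.
  intros ->. unfold bl. rewrite !im_mkl.
  replace (S (2 * k + 1)) with (2 * S k)%nat by lia.
  rewrite !(proj2 (sum_par _ _)), !sumR_S.
  replace (2 * k + 1 - S (2 * k))%nat with 0%nat by lia. rewrite INR_0.
  rewrite Rmult_0_l, Rmult_0_r, Rplus_0_r.
  apply sumR_ext; intros j Hj.
  replace (2 * k + 1 - 1 - 2 * j)%nat with (2 * k + 1 - S (2 * j))%nat by lia.
  replace (2 * j + 1)%nat with (S (2 * j)) by lia. ring.
Qed.

Lemma core m h v c : v = c + sumR (S m) (fun j => (-1)^j * h (m - j)%nat) ->
  sumR (S m) (fun j => (-1)^j * h j) + (-1)^(S m) * v = (-1)^(S m) * c.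
Proof.
  rewrite sumR_rev. intros ->. set (S0 := sumR (S m) _). simpl pow.
  replace (S0 + -1 * (-1) ^ m * (c + (-1) ^ m * S0)) with (S0 - ((-1)^m * (-1)^m) * S0 + -1 * (-1)^m * c) by ring.
  rewrite m1_sq. ring.
Qed.

Lemma sumR_trunc n K F : (K <= n)%nat -> sumR n (fun j => if (j <? K)%nat then F j else 0) = sumR K F.
Proof.
  induction n; intros H.
  - replace K with 0%nat by lia. reflexivity.
  - destruct (Nat.eq_dec K (S n)) as [->|HK].
    + rewrite !sumR_S. replace (n <? S n)%nat with true by (symmetry; apply Nat.ltb_lt; lia).
      f_equal. apply sumR_ext. intros m Hm. replace (m <? S n)%nat with true by (symmetry; apply Nat.ltb_lt; lia).
      reflexivity.
    + rewrite sumR_S, IHn by lia. replace (n <? K)%nat with false. ring.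
      symmetry. apply Nat.ltb_ge. lia.
Qed.

Lemma sumR_guard n K (b : nat -> bool) F : (K <= n)%nat -> (forall j, b j = (j <? K)%nat) ->
  sumR n (fun j => if b j then F j else 0) = sumR K F.
Proof.
  intros H Hb. rewrite <- (sumR_trunc n K F H). apply sumR_ext. intros m _. rewrite Hb. reflexivity.
Qed.

Lemma CEvenIm n k g c : n = (2 * k)%nat -> (2 <= k)%nat ->
  g (n - 1)%nat = c + sumR n (fun j => if (2 * j <=? n - 3)%nat then (-1)^j * g (n - 3 - 2 * j)%nat else 0) ->
  im (mkl (S n) g) = (-1)^(k + 1) * c.
Proof.
  intros Hn Hk H.
  rewrite (sumR_guard n (k - 1) _ (fun j => (-1)^j * g (n - 3 - 2 * j)%nat)) in H.
  2: lia.
  2:{ intros j. apply Bool.eq_iff_eq_true. rewrite Nat.leb_le, Nat.ltb_lt. lia. }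
  rewrite im_mkl. subst n. rewrite sumR_S, (proj2 (sum_par _ _)).
  rewrite (proj1 (ipw_par k)). simpl snd. rewrite Rmult_0_r, Rplus_0_r.
  destruct k as [|[|p]]; [lia|lia|].
  replace (S (S p) - 1)%nat with (S p) in H by lia.
  rewrite sumR_S.
  pose proof (core p (fun j => g (S (2 * j))) (g (S (2 * S p))) c) as C.
  replace (2 * S (S p) - 1)%nat with (S (2 * S p)) in H by lia.
  rewrite C.
  - replace (S (S p) + 1)%nat with (S (S (S p))) by lia. simpl pow. ring.
  - rewrite H. f_equal. apply sumR_ext. intros j Hj. do 2 f_equal. lia.
Qed.

Lemma CEvenRe n k g c : n = (2 * k)%nat -> (1 <= k)%nat ->
  g n = c + sumR n (fun j => if (2 * j <=? n - 2)%nat then (-1)^j * g (n - 2 - 2 * j)%nat else 0) ->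
  re (mkl (S n) g) = (-1)^k * c.
Proof.
  intros Hn Hk H.
  rewrite (sumR_guard n k _ (fun j => (-1)^j * g (n - 2 - 2 * j)%nat)) in H.
  2: lia.
  2:{ intros j. apply Bool.eq_iff_eq_true. rewrite Nat.leb_le, Nat.ltb_lt. lia. }
  rewrite re_mkl. subst n. rewrite sumR_S, (proj1 (sum_par _ _)).
  rewrite (proj1 (ipw_par k)). simpl fst.
  destruct k as [|m]; [lia|].
  pose proof (core m (fun j => g (2 * j)%nat) (g (2 * S m)%nat) c) as C.
  rewrite <- C.
  - ring.
  - rewrite H. f_equal. apply sumR_ext. intros j Hj. do 2 f_equal. lia.
Qed.

Lemma COddRe n k g c : n = (2 * k + 1)%nat -> (1 <= k)%nat ->
  g (n - 1)%nat = c + sumR n (fun j => if (2 * j <=? n - 3)%nat then (-1)^j * g (n - 3 - 2 * j)%nat else 0) ->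
  re (mkl (S n) g) = (-1)^k * c.
Proof.
  intros Hn Hk H.
  rewrite (sumR_guard n k _ (fun j => (-1)^j * g (n - 3 - 2 * j)%nat)) in H.
  2: lia.
  2:{ intros j. apply Bool.eq_iff_eq_true. rewrite Nat.leb_le, Nat.ltb_lt. lia. }
  rewrite re_mkl. subst n. replace (S (2 * k + 1)) with (2 * S k)%nat by lia.
  rewrite (proj1 (sum_par _ _)), sumR_S.
  replace (2 * k + 1 - 1)%nat with (2 * k)%nat in H by lia.
  destruct k as [|m]; [lia|].
  pose proof (core m (fun j => g (2 * j)%nat) (g (2 * S m)%nat) c) as C.
  rewrite <- C.
  - ring.
  - rewrite H. f_equal. apply sumR_ext. intros j Hj. do 2 f_equal. lia.
Qed.

Lemma COddIm n k g c : n = (2 * k + 1)%nat -> (1 <= k)%nat ->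
  g n = c + sumR n (fun j => if (2 * j <=? n - 2)%nat then (-1)^j * g (n - 2 - 2 * j)%nat else 0) ->
  im (mkl (S n) g) = (-1)^k * c.
Proof.
  intros Hn Hk H.
  rewrite (sumR_guard n k _ (fun j => (-1)^j * g (n - 2 - 2 * j)%nat)) in H.
  2: lia.
  2:{ intros j. apply Bool.eq_iff_eq_true. rewrite Nat.leb_le, Nat.ltb_lt. lia. }
  rewrite im_mkl. subst n. replace (S (2 * k + 1)) with (2 * S k)%nat by lia.
  rewrite (proj2 (sum_par _ _)), sumR_S.
  replace (2 * k + 1)%nat with (S (2 * k)) in H by lia.
  destruct k as [|m]; [lia|].
  pose proof (core m (fun j => g (S (2 * j))) (g (S (2 * S m))) c) as C.
  rewrite <- C.
  - ring.
  - rewrite H. f_equal. apply sumR_ext. intros j Hj. do 2 f_equal. lia.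
Qed.

Lemma D_guard (b : bool) w f x l : dpl f x l -> dpl (fun t => if b then w * f t else 0) x (if b then w * l else 0).
Proof.
  intros H. destruct b.
  - eapply Dl_eq. apply Dl_mult. apply Dl_const. exact H. cbv beta. ring.
  - apply Dl_const.
Qed.

Lemma open_x Om x y : open2 Om -> Om x y -> exists r, 0 < r /\ forall t, Rabs (t - x) < r -> Om t y.
Proof.
  intros Hop H. destruct (Hop x y H) as [r [Hr Hb]]. exists r. split; auto.
  intros t Ht. apply Hb. apply Rabs_def2 in Ht. replace (y - y) with 0 by ring. nra.
Qed.
Lemma open_y Om x y : open2 Om -> Om x y -> exists r, 0 < r /\ forall t, Rabs (t - y) < r -> Om x t.
Proof.
  intros Hop H. destruct (Hop x y H) as [r [Hr Hb]]. exists r. split; auto.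
  intros t Ht. apply Hb. apply Rabs_def2 in Ht. replace (x - x) with 0 by ring. nra.
Qed.

Lemma DCx n Om (a : nat -> R -> R -> R) M c (b : nat -> bool) (idx : nat -> nat) (X : nat -> R) XM x y :
  open2 Om -> Om x y ->
  (forall x y, Om x y -> a M x y = c + sumR n (fun j => if b j then (-1)^j * a (idx j) x y else 0)) ->
  has_dx (a M) x y XM -> (forall j, (j < n)%nat -> has_dx (a (idx j)) x y (X (idx j))) ->
  XM = sumR n (fun j => if b j then (-1)^j * X (idx j) else 0).
Proof.
  intros Hop Hxy Hc HM HX. destruct (open_x Om x y Hop Hxy) as [r [Hr Hb]].
  assert (D : dpl (fun t => c + sumR n (fun j => if b j then (-1)^j * a (idx j) t y else 0)) x
                  (0 + sumR n (fun j => if b j then (-1)^j * X (idx j) else 0))).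
  { apply Dl_plus. apply Dl_const.
    apply (D_sumR n (fun j t => if b j then (-1)^j * a (idx j) t y else 0)).
    intros j Hj. apply D_guard. apply HX. exact Hj. }
  apply (Dl_local _ (fun t => a M t y) x _ r Hr) in D.
  - unfold has_dx in HM. rewrite (uniqueness_limite _ _ _ _ HM D). ring.
  - intros t Ht. symmetry. apply Hc. apply Hb. exact Ht.
Qed.

Lemma DCy n Om (a : nat -> R -> R -> R) M c (b : nat -> bool) (idx : nat -> nat) (Y : nat -> R) YM x y :
  open2 Om -> Om x y ->
  (forall x y, Om x y -> a M x y = c + sumR n (fun j => if b j then (-1)^j * a (idx j) x y else 0)) ->
  has_dy (a M) x y YM -> (forall j, (j < n)%nat -> has_dy (a (idx j)) x y (Y (idx j))) ->
  YM = sumR n (fun j => if b j then (-1)^j * Y (idx j) else 0).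
Proof.
  intros Hop Hxy Hc HM HY. destruct (open_y Om x y Hop Hxy) as [r [Hr Hb]].
  assert (D : dpl (fun t => c + sumR n (fun j => if b j then (-1)^j * a (idx j) x t else 0)) y
                  (0 + sumR n (fun j => if b j then (-1)^j * Y (idx j) else 0))).
  { apply Dl_plus. apply Dl_const.
    apply (D_sumR n (fun j t => if b j then (-1)^j * a (idx j) x t else 0)).
    intros j Hj. apply D_guard. apply HY. exact Hj. }
  apply (Dl_local _ (fun t => a M x t) y _ r Hr) in D.
  - unfold has_dy in HM. rewrite (uniqueness_limite _ _ _ _ HM D). ring.
  - intros t Ht. symmetry. apply Hc. apply Hb. exact Ht.
Qed.

Definition Qf Lx Ly L B W Xl Yl :=
  ladd (lscal Lx (ladd B (0 :: 0 :: B)))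
       (ladd (lscal Ly (ladd W (0 :: 0 :: W))) (lscal (2 * L) (ladd Xl (0 :: Yl)))).

Lemma Q_reim Lx Ly L B W Xl Yl :
  re (lD (Qf Lx Ly L B W Xl Yl)) = 2 * (- Lx * im B - Ly * im W + L * (re (lD Xl) + re Yl - im (lD Yl))) /\
  im (lD (Qf Lx Ly L B W Xl Yl)) = 2 * (Lx * re B + Ly * re W + L * (im (lD Xl) + im Yl + re (lD Yl))).
Proof.
  unfold Qf.
  repeat rewrite ?re_D_add, ?im_D_add, ?re_D_scal, ?im_D_scal, ?re_D_cons, ?im_D_cons,
    ?re_cons, ?im_cons, ?re_add, ?im_add.
  split; ring.
Qed.

Lemma Q_evR t Lx Ly L B W Xl Yl :
  evR t (Qf Lx Ly L B W Xl Yl) = Lx * (evR t B + t * t * evR t B) + Ly * (evR t W + t * t * evR t W)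
     + 2 * L * (evR t Xl + t * evR t Yl).
Proof. unfold Qf. rewrite !evR_add, !evR_scal, !evR_add, !evR_cons. ring. Qed.

Lemma main_point n (a : nat -> R -> R -> R) Lam x y Lx Ly (X Y : nat -> R) :
  Lam x y <> 0 -> has_dx Lam x y Lx -> has_dy Lam x y Ly ->
  (forall i, (i <= n)%nat -> has_dx (a i) x y (X i)) ->
  (forall i, (i <= n)%nat -> has_dy (a i) x y (Y i)) ->
  (forall p1 p2, poisson_zero_at (Ham Lam) (Fpoly n a) x y p1 p2) ->
  - Lx * im (bl n (fun m => a m x y)) - Ly * im (lD (mkl (S n) (fun m => a m x y)))
    + Lam x y * (re (lD (mkl (S n) X)) + re (mkl (S n) Y) - im (lD (mkl (S n) Y))) = 0 /\
  Lx * re (bl n (fun m => a m x y)) + Ly * re (lD (mkl (S n) (fun m => a m x y)))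
    + Lam x y * (im (lD (mkl (S n) X)) + im (mkl (S n) Y) + re (lD (mkl (S n) Y))) = 0.
Proof.
  intros HL0 HLx HLy HX HY HP.
  set (L := Lam x y).
  set (Al := mkl (S n) (fun m => a m x y)).
  set (Bl := bl n (fun m => a m x y)).
  set (Xl := mkl (S n) X). set (Yl := mkl (S n) Y).
  assert (HQ : forall t, evR t (Qf Lx Ly L Bl (lD Al) Xl Yl) = 0).
  { intro t. specialize (HP 1 t).
    specialize (HP (-(1 + t^2) * Lx / (2 * L^2)) (-(1 + t^2) * Ly / (2 * L^2)) (1 / L) (t / L)
                   (evR t Xl) (evR t Yl) (evR t Bl) (evR t (lD Al))).
    assert (E : (- (1 + t ^ 2) * Lx / (2 * L ^ 2) * evR t Bl - 1 / L * evR t Xl +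
                (- (1 + t ^ 2) * Ly / (2 * L ^ 2) * evR t (lD Al) - t / L * evR t Yl)) = 0).
    { apply HP.
      - unfold d4_x, Ham. eapply Dl_eq.
        + apply Dl_div. apply Dl_const. apply Dl_mult. apply Dl_const. exact HLx. cbv beta; fold L; intro Hc; apply HL0; fold L; lra.
        + cbv beta. fold L. field. exact HL0.
      - unfold d4_y, Ham. eapply Dl_eq.
        + apply Dl_div. apply Dl_const. apply Dl_mult. apply Dl_const. exact HLy. cbv beta; fold L; intro Hc; apply HL0; fold L; lra.
        + cbv beta. fold L. field. exact HL0.
      - unfold d4_p1, Ham. eapply Dl_eq.
        + apply Dl_div. apply Dl_plus. apply Dl_pow. apply Dl_const. apply Dl_const. cbv beta; fold L; intro Hc; apply HL0; fold L; lra.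
        + cbv beta. fold L. simpl INR. simpl pred. field. exact HL0.
      - unfold d4_p2, Ham. eapply Dl_eq.
        + apply Dl_div. apply Dl_plus. apply Dl_const. apply Dl_pow. apply Dl_const. cbv beta; fold L; intro Hc; apply HL0; fold L; lra.
        + cbv beta. fold L. simpl INR. simpl pred. field. exact HL0.
      - unfold d4_x, Fpoly. eapply Dl_eq.
        + apply (D_sumR (S n) (fun i s => a i s y * 1 ^ (n - i) * t ^ i) (fun i => X i * 1 ^ (n - i) * t ^ i)).
          intros i Hi. eapply Dl_eq. apply Dl_mult. apply Dl_mult. apply HX. lia. apply Dl_const. apply Dl_const.
          cbv beta. ring.
        + unfold Xl. rewrite evR_mkl. apply sumR_ext. intros m _. rewrite pow1. ring.
      - unfold d4_y, Fpoly. eapply Dl_eq.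
        + apply (D_sumR (S n) (fun i s => a i x s * 1 ^ (n - i) * t ^ i) (fun i => Y i * 1 ^ (n - i) * t ^ i)).
          intros i Hi. eapply Dl_eq. apply Dl_mult. apply Dl_mult. apply HY. lia. apply Dl_const. apply Dl_const.
          cbv beta. ring.
        + unfold Yl. rewrite evR_mkl. apply sumR_ext. intros m _. rewrite pow1. ring.
      - unfold d4_p1, Fpoly. eapply Dl_eq.
        + apply (D_sumR (S n) (fun i s => a i x y * s ^ (n - i) * t ^ i)
                   (fun i => a i x y * (INR (n - i) * 1 ^ pred (n - i)) * t ^ i)).
          intros i Hi. eapply Dl_eq. apply Dl_mult. apply Dl_mult. apply Dl_const. apply Dl_pow. apply Dl_const.
          cbv beta. ring.
        + unfold Bl, bl. rewrite evR_mkl. apply sumR_ext. intros m _. rewrite pow1. ring.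
      - unfold d4_p2, Fpoly. apply (Dl_ext (fun s => evR s Al)).
        + intro s. unfold Al. rewrite evR_mkl. apply sumR_ext. intros m _. rewrite pow1. ring.
        + apply evR_deriv. }
    rewrite Q_evR.
    match type of E with ?e = 0 => transitivity (-(2 * L^2) * e) end.
    - field. exact HL0.
    - rewrite E. ring. }
  apply evR_zero_coef, lzero_D, lzero_reim in HQ. destruct HQ as [H1 H2].
  destruct (Q_reim Lx Ly L Bl (lD Al) Xl Yl) as [E1 E2].
  split; lra.
Qed.

Lemma uniform n (a : nat -> R -> R -> R) Lam x y Lx Ly (X Y : nat -> R) rC iC :
  Lam x y <> 0 -> has_dx Lam x y Lx -> has_dy Lam x y Ly ->
  (forall i, (i <= n)%nat -> has_dx (a i) x y (X i)) ->
  (forall i, (i <= n)%nat -> has_dy (a i) x y (Y i)) ->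
  (forall p1 p2, poisson_zero_at (Ham Lam) (Fpoly n a) x y p1 p2) ->
  re (mkl (S n) X) = 0 -> im (mkl (S n) X) = 0 -> re (mkl (S n) Y) = 0 -> im (mkl (S n) Y) = 0 ->
  re (mkl (S n) (fun m => a m x y)) = rC -> im (mkl (S n) (fun m => a m x y)) = iC ->
  Lam x y * re (bl n X) + Lx * re (bl n (fun m => a m x y)) - Lam x y * im (bl n Y)
    + Ly * (- im (bl n (fun m => a m x y)) + INR n * iC) = 0 /\
  Lam x y * im (bl n X) + Lx * im (bl n (fun m => a m x y)) + Lam x y * re (bl n Y)
    + Ly * (re (bl n (fun m => a m x y)) - INR n * rC) = 0.
Proof.
  intros HL0 HLx HLy HX HY HP H1 H2 H3 H4 H5 H6.
  destruct (main_point n a Lam x y Lx Ly X Y HL0 HLx HLy HX HY HP) as [M1 M2].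
  unfold bl. destruct (bId n (fun m => a m x y)) as [A1 A2].
  destruct (bId n X) as [X1 X2]. destruct (bId n Y) as [Y1 Y2].
  unfold bl in M1, M2. rewrite A1, A2, X1, X2, Y1, Y2. rewrite A2 in M1. rewrite A1 in M2.
  rewrite H1, H2, H3, H4, H5, H6 in *. split; lra.
Qed.

Lemma D_lin_x K (w : nat -> R) (idx : nat -> nat) (a : nat -> R -> R -> R) (X : nat -> R) x y :
  (forall j, (j < K)%nat -> has_dx (a (idx j)) x y (X (idx j))) ->
  dpl (fun t => sumR K (fun j => w j * a (idx j) t y)) x (sumR K (fun j => w j * X (idx j))).
Proof.
  intros H. apply (D_sumR K (fun j t => w j * a (idx j) t y)). intros j Hj.
  eapply Dl_eq. apply Dl_mult. apply Dl_const. apply H; auto. cbv beta; ring.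
Qed.
Lemma D_lin_y K (w : nat -> R) (idx : nat -> nat) (a : nat -> R -> R -> R) (Y : nat -> R) x y :
  (forall j, (j < K)%nat -> has_dy (a (idx j)) x y (Y (idx j))) ->
  dpl (fun t => sumR K (fun j => w j * a (idx j) x t)) y (sumR K (fun j => w j * Y (idx j))).
Proof.
  intros H. apply (D_sumR K (fun j t => w j * a (idx j) x t)). intros j Hj.
  eapply Dl_eq. apply Dl_mult. apply Dl_const. apply H; auto. cbv beta; ring.
Qed.

Lemma EvenIm' n k g : n = (2 * k)%nat -> (2 <= k)%nat ->
  sumR (k - 1) (fun j => (-1)^j * INR (n - 2 - 2 * j) * g (2 * j + 1)%nat) = im (bl n g) - im (mkl (S n) g).
Proof. intros. rewrite <- (EvenIm n k g); auto. ring. Qed.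
Lemma OddRe' n k g : n = (2 * k + 1)%nat ->
  sumR k (fun j => (-1)^j * INR (n - 1 - 2 * j) * g (2 * j)%nat) = re (bl n g) - re (mkl (S n) g).
Proof. intros. rewrite <- (OddRe n k g); auto. ring. Qed.

Theorem lemma1 (n : nat) (Om : R -> R -> Prop) (Lam : R -> R -> R)
  (a : nat -> R -> R -> R) (c1 c2 : R) :
  (3 <= n)%nat ->
  open2 Om ->
  smooth_on Om Lam ->
  (forall x y, Om x y -> 0 < Lam x y) ->
  (forall i, (i <= n)%nat -> smooth_on Om (a i)) ->
  (forall x y p1 p2, Om x y -> poisson_zero_at (Ham Lam) (Fpoly n a) x y p1 p2) ->
  (forall x y, Om x y ->
     a (n - 1)%nat x y = c1 + sumR n (fun j =>
       if (2 * j <=? n - 3)%nat then (-1) ^ j * a (n - 3 - 2 * j)%nat x y else 0)) ->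
  (forall x y, Om x y ->
     a n x y = c2 + sumR n (fun j =>
       if (2 * j <=? n - 2)%nat then (-1) ^ j * a (n - 2 - 2 * j)%nat x y else 0)) ->
  (forall k, n = (2 * k)%nat ->
     let Se := fun x y => sumR k (fun j => (-1) ^ j * INR (n - 2 * j) * a (2 * j)%nat x y) in
     let So := fun x y => sumR (k - 1) (fun j =>
                 (-1) ^ j * INR (n - 2 - 2 * j) * a (2 * j + 1)%nat x y) in
     forall x y, Om x y ->
       div_zero_at (fun x y => Se x y * Lam x y)
                   (fun x y => (- So x y + (-1) ^ (k + 1) * INR (n - 1) * c1) * Lam x y) x y /\
       div_zero_at (fun x y => (So x y + (-1) ^ (k + 1) * c1) * Lam x y)
                   (fun x y => (Se x y + (-1) ^ (k + 1) * INR n * c2) * Lam x y) x y) /\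
  (forall k, n = (2 * k + 1)%nat ->
     let Te := fun x y => sumR k (fun j => (-1) ^ j * INR (n - 1 - 2 * j) * a (2 * j)%nat x y) in
     let To := fun x y => sumR k (fun j =>
                 (-1) ^ j * INR (n - 1 - 2 * j) * a (2 * j + 1)%nat x y) in
     forall x y, Om x y ->
       div_zero_at (fun x y => (Te x y + (-1) ^ k * c1) * Lam x y)
                   (fun x y => (- To x y + (-1) ^ k * INR n * c2) * Lam x y) x y /\
       div_zero_at (fun x y => To x y * Lam x y)
                   (fun x y => (Te x y + (-1) ^ (k + 1) * INR (n - 1) * c1) * Lam x y) x y).
Proof.
  intros Hn Hop HsL Hpos Hsa HP Hc1 Hc2.
  assert (PT : forall x y, Om x y -> exists Lx Ly (X Y : nat -> R),
     has_dx Lam x y Lx /\ has_dy Lam x y Ly /\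
     (forall i, (i <= n)%nat -> has_dx (a i) x y (X i)) /\
     (forall i, (i <= n)%nat -> has_dy (a i) x y (Y i))).
  { intros x y Hxy. destruct HsL as [DL [HDL0 HDL]]. destruct (HDL nil x y Hxy) as [H1 [H2 _]].
    rewrite HDL0 in H1, H2.
    exists (DL (false :: nil) x y), (DL (true :: nil) x y).
    exists (fun i => epsilon (inhabits 0) (fun l => has_dx (a i) x y l)).
    exists (fun i => epsilon (inhabits 0) (fun l => has_dy (a i) x y l)).
    split; [exact H1|]. split; [exact H2|].
    split; intros i Hi; apply epsilon_spec; destruct (Hsa i Hi) as [D [HD0 HD]];
      destruct (HD nil x y Hxy) as [K1 [K2 _]]; rewrite HD0 in K1, K2; eauto. }
  assert (Hpk : forall k, (-1)^(k+1) = - (-1)^k) by (intro k; rewrite pow_add; simpl; ring).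
  assert (Hn1 : INR (n - 1) = INR n - 1) by (rewrite minus_INR by lia; simpl; ring).
  split.
  - intros k Hk. cbv zeta. intros x y Hxy.
    assert (Hk2 : (2 <= k)%nat) by lia.
    destruct (PT x y Hxy) as (Lx & Ly & X & Y & HLx & HLy & HX & HY).
    assert (HL0 : Lam x y <> 0) by (specialize (Hpos x y Hxy); lra).
    assert (CA1 : im (mkl (S n) (fun m => a m x y)) = (-1)^(k+1) * c1)
      by (apply (CEvenIm n k); auto; apply Hc1; auto).
    assert (CA2 : re (mkl (S n) (fun m => a m x y)) = (-1)^k * c2)
      by (apply (CEvenRe n k); auto; try lia; apply Hc2; auto).
    assert (CX1 : im (mkl (S n) X) = 0).
    { rewrite (CEvenIm n k X 0); auto. ring. rewrite Rplus_0_l.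
      apply (DCx n Om a (n - 1) c1 (fun j => (2 * j <=? n - 3)%nat) (fun j => (n - 3 - 2 * j)%nat) X (X (n - 1)%nat) x y); auto.
      apply HX; lia. intros; apply HX; lia. }
    assert (CX2 : re (mkl (S n) X) = 0).
    { rewrite (CEvenRe n k X 0); auto. ring. lia. rewrite Rplus_0_l.
      apply (DCx n Om a n c2 (fun j => (2 * j <=? n - 2)%nat) (fun j => (n - 2 - 2 * j)%nat) X (X n) x y); auto.
      intros; apply HX; lia. }
    assert (CY1 : im (mkl (S n) Y) = 0).
    { rewrite (CEvenIm n k Y 0); auto. ring. rewrite Rplus_0_l.
      apply (DCy n Om a (n - 1) c1 (fun j => (2 * j <=? n - 3)%nat) (fun j => (n - 3 - 2 * j)%nat) Y (Y (n - 1)%nat) x y); auto.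
      apply HY; lia. intros; apply HY; lia. }
    assert (CY2 : re (mkl (S n) Y) = 0).
    { rewrite (CEvenRe n k Y 0); auto. ring. lia. rewrite Rplus_0_l.
      apply (DCy n Om a n c2 (fun j => (2 * j <=? n - 2)%nat) (fun j => (n - 2 - 2 * j)%nat) Y (Y n) x y); auto.
      intros; apply HY; lia. }
    destruct (uniform n a Lam x y Lx Ly X Y _ _ HL0 HLx HLy HX HY (fun p1 p2 => HP x y p1 p2 Hxy) CX2 CX1 CY2 CY1 CA2 CA1)
      as [U1 U2].
    pose proof (EvenRe n k (fun m => a m x y) Hk) as ERA. cbv beta in ERA.
    pose proof (EvenRe n k X Hk) as ERX. pose proof (EvenRe n k Y Hk) as ERY.
    pose proof (EvenIm' n k (fun m => a m x y) Hk Hk2) as EIA. cbv beta in EIA.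
    pose proof (EvenIm' n k X Hk Hk2) as EIX. pose proof (EvenIm' n k Y Hk Hk2) as EIY.
    unfold div_zero_at, has_dx, has_dy. split.
    + do 2 eexists. split; [|split].
      * eapply Dl_mult. eapply (D_lin_x _ _ _ _ X). intros j Hj; apply HX; lia. exact HLx.
      * eapply Dl_mult. eapply Dl_plus. eapply Dl_opp. eapply (D_lin_y _ _ _ _ Y). intros j Hj; apply HY; lia.
        apply Dl_const. exact HLy.
      * cbv beta. rewrite ERA, ERX, EIA, EIY, CY1, CA1. rewrite Hpk in *. rewrite Hn1. lra.
    + do 2 eexists. split; [|split].
      * eapply Dl_mult. eapply Dl_plus. eapply (D_lin_x _ _ _ _ X). intros j Hj; apply HX; lia.
        apply Dl_const. exact HLx.
      * eapply Dl_mult. eapply Dl_plus. eapply (D_lin_y _ _ _ _ Y). intros j Hj; apply HY; lia.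
        apply Dl_const. exact HLy.
      * cbv beta. rewrite ERA, EIX, EIA, ERY, CX1, CA1. rewrite Hpk in *. lra.
  - intros k Hk. cbv zeta. intros x y Hxy.
    assert (Hk1 : (1 <= k)%nat) by lia.
    destruct (PT x y Hxy) as (Lx & Ly & X & Y & HLx & HLy & HX & HY).
    assert (HL0 : Lam x y <> 0) by (specialize (Hpos x y Hxy); lra).
    assert (CA1 : re (mkl (S n) (fun m => a m x y)) = (-1)^k * c1)
      by (apply (COddRe n k); auto; apply Hc1; auto).
    assert (CA2 : im (mkl (S n) (fun m => a m x y)) = (-1)^k * c2)
      by (apply (COddIm n k); auto; apply Hc2; auto).
    assert (CX1 : re (mkl (S n) X) = 0).
    { rewrite (COddRe n k X 0); auto. ring. rewrite Rplus_0_l.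
      apply (DCx n Om a (n - 1) c1 (fun j => (2 * j <=? n - 3)%nat) (fun j => (n - 3 - 2 * j)%nat) X (X (n - 1)%nat) x y); auto.
      apply HX; lia. intros; apply HX; lia. }
    assert (CX2 : im (mkl (S n) X) = 0).
    { rewrite (COddIm n k X 0); auto. ring. rewrite Rplus_0_l.
      apply (DCx n Om a n c2 (fun j => (2 * j <=? n - 2)%nat) (fun j => (n - 2 - 2 * j)%nat) X (X n) x y); auto.
      intros; apply HX; lia. }
    assert (CY1 : re (mkl (S n) Y) = 0).
    { rewrite (COddRe n k Y 0); auto. ring. rewrite Rplus_0_l.
      apply (DCy n Om a (n - 1) c1 (fun j => (2 * j <=? n - 3)%nat) (fun j => (n - 3 - 2 * j)%nat) Y (Y (n - 1)%nat) x y); auto.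
      apply HY; lia. intros; apply HY; lia. }
    assert (CY2 : im (mkl (S n) Y) = 0).
    { rewrite (COddIm n k Y 0); auto. ring. rewrite Rplus_0_l.
      apply (DCy n Om a n c2 (fun j => (2 * j <=? n - 2)%nat) (fun j => (n - 2 - 2 * j)%nat) Y (Y n) x y); auto.
      intros; apply HY; lia. }
    destruct (uniform n a Lam x y Lx Ly X Y _ _ HL0 HLx HLy HX HY (fun p1 p2 => HP x y p1 p2 Hxy) CX1 CX2 CY1 CY2 CA1 CA2)
      as [U1 U2].
    pose proof (OddRe' n k (fun m => a m x y) Hk) as ERA. cbv beta in ERA.
    pose proof (OddRe' n k X Hk) as ERX. pose proof (OddRe' n k Y Hk) as ERY.
    pose proof (OddIm n k (fun m => a m x y) Hk) as EIA. cbv beta in EIA.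
    pose proof (OddIm n k X Hk) as EIX. pose proof (OddIm n k Y Hk) as EIY.
    unfold div_zero_at, has_dx, has_dy. split.
    + do 2 eexists. split; [|split].
      * eapply Dl_mult. eapply Dl_plus. eapply (D_lin_x _ _ _ _ X). intros j Hj; apply HX; lia.
        apply Dl_const. exact HLx.
      * eapply Dl_mult. eapply Dl_plus. eapply Dl_opp. eapply (D_lin_y _ _ _ _ Y). intros j Hj; apply HY; lia.
        apply Dl_const. exact HLy.
      * cbv beta. rewrite ERA, ERX, EIA, EIY, CX1, CA1. lra.
    + do 2 eexists. split; [|split].
      * eapply Dl_mult. eapply (D_lin_x _ _ _ _ X). intros j Hj; apply HX; lia. exact HLx.
      * eapply Dl_mult. eapply Dl_plus. eapply (D_lin_y _ _ _ _ Y). intros j Hj; apply HY; lia.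
        apply Dl_const. exact HLy.
      * cbv beta. rewrite ERA, EIX, EIA, ERY, CY1, CA1. rewrite Hpk, Hn1. lra.
Qed.
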